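(* The following two identities hold. (i) For all smooth functions $\varrho,a,f$ on $\mathbb{R}^3$, $$\sum_{i_1,i_2,i_3,j_1,j_2,j_3,k_1,k_2,k_3=1}^{3}\varepsilon^{i_1i_2i_3}\varepsilon^{j_1j_2j_3}\varepsilon^{k_1k_2k_3}\,\varrho^2\,\frac{\partial^2\varrho}{\partial x^{i_2}\partial x^{j_1}}\,\frac{\partial^2 a}{\partial x^{i_3}\partial x^{k_1}}\,\frac{\partial^2 a}{\partial x^{j_3}\partial x^{k_2}}\,\frac{\partial^2 a}{\partial x^{j_2}\partial x^{k_3}}\,\frac{\partial f}{\partial x^{i_1}}=0.$$ (ii) For all smooth functions $\varrho,a^1,a^2,f$ on $\mathbb{R}^4$, $$\sum_{\text{all indices}=1}^{4}\varepsilon^{i_1i_2i_3i_4}\varepsilon^{j_1j_2j_3j_4}\varepsilon^{k_1k_2k_3k_4}\,\varrho^2\,\varrho_{i_2j_1}\,a^1_{i_3k_1}\,a^1_{j_3k_2}\,a^1_{j_2k_3}\,a^2_{i_4}\,a^2_{j_4}\,a^2_{k_4}\,f_{i_1}=0,$$ where lower indices denote partial derivatives, e.g. $\varrho_{ij}=\partial^2\varrho/\partial x^i\partial x^j$ and $a^2_{i}=\partial a^2/\partial x^i$. These are, respectively, the formula of the 3D Nambu micro-graph $(0,1,4;1,6,5;4,5,6)$ and of its embedding $(0,1,4,7;1,6,5,8;4,5,6,9)$ into 4D.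
   Context: $\varepsilon^{i_1\dots i_d}$ denotes the Levi-Civita symbol in dimension $d$, and $x^1,\dots,x^d$ are the coordinates on $\mathbb{R}^d$. All sums run over every repeated index from $1$ to $d$. The embedding of a micro-graph from dimension $d$ into dimension $d+1$ is defined as follows: - each Levi-Civita vertex gets one extra, last, outgoing edge to a new terminal vertex carrying a new Casimir function $a^{d-1}$; - all other edges are kept unchanged, with indices now ranging over $1,\dots,d+1$. *)

(* Defs.v *)
From HB Require Import structures.
From mathcomp Require Import all_boot all_order all_algebra all_fingroup.
From mathcomp Require Import all_classical all_reals all_analysis.
Set Implicit Arguments. Unset Strict Implicit. Unset Printing Implicit Defensive.
Import Order.TTheory GRing.Theory Num.Theory.
Local Open Scope ring_scope.
Import numFieldNormedType.Exports.

Definition levi (d : nat) (R : pzRingType) (t : d.-tuple 'I_d) : R :=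
  match [pick p : {perm 'I_d} | [forall k, p k == tnth t k]] with
  | Some p => (-1) ^+ p
  | None => 0
  end.

Definition pd (R : realType) (n : nat) (i : 'I_n) (g : 'rV[R]_n -> R)
  : 'rV[R]_n -> R :=
  fun x => 'D_(delta_mx 0 i) g x.

Fixpoint iterpd (R : realType) (n : nat) (l : seq 'I_n) (g : 'rV[R]_n -> R)
  : 'rV[R]_n -> R :=
  match l with
  | [::] => g
  | i :: l' => pd i (iterpd l' g)
  end.

Definition smooth (R : realType) (n : nat) (g : 'rV[R]_n -> R) : Prop :=
  forall (l : seq 'I_n) (x : 'rV[R]_n), differentiable (iterpd l g) x.
Arguments levi {d R} t.

(* Main.v *)
Require Import Defs.
From HB Require Import structures.
From mathcomp Require Import all_boot all_order all_algebra all_fingroup.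
From mathcomp Require Import all_classical all_reals all_analysis.
From mathcomp Require Import ring lra.
Import Order.TTheory GRing.Theory Num.Theory.
Import numFieldNormedType.Exports.
Local Open Scope ring_scope.
Set Implicit Arguments. Unset Strict Implicit.

Section LeviGen.
Variables (d : nat) (R : pzRingType).

Lemma levi_char (t : d.-tuple 'I_d) (p : {perm 'I_d}) :
  (forall k, p k = tnth t k) -> levi (R:=R) t = (-1) ^+ p.
Proof.
move=> H; rewrite /levi; case: pickP => [q /forallP Hq|/(_ p)].
  have -> : q = p by apply/permP => k; rewrite H; apply/eqP/Hq.
  by [].
by move/negP; case; apply/forallP => k; rewrite H.
Qed.

Lemma levi_none (t : d.-tuple 'I_d) :
  (forall p : {perm 'I_d}, exists k, p k != tnth t k) -> levi (R:=R) t = 0.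
Proof.
move=> H; rewrite /levi; case: pickP => [q /forallP Hq|//].
by have [k /negP] := H q; rewrite Hq.
Qed.

Lemma levi_permute (t : d.-tuple 'I_d) (s : {perm 'I_d}) :
  levi (R:=R) [tuple tnth t (s k) | k < d] = (-1) ^+ s * levi t.
Proof.
rewrite {2}/levi; case: pickP => [p /forallP Hp|Hn].
  rewrite (@levi_char _ ((s * p)%g)) ?odd_permM ?signr_addb // => k.
  by rewrite permM tnth_mktuple; apply/eqP/Hp.
rewrite mulr0 levi_none // => p; apply/existsP; apply/negP => /forallP Hp.
move: (Hn ((s^-1)%g * p)%g) => /negP; apply; apply/forallP => k.
have := Hp ((s^-1)%g k); rewrite tnth_mktuple permKV permM => ->. by [].
Qed.

End LeviGen.

Unset Implicit Arguments. Set Strict Implicit.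
Definition o0 : 'I_4 := @Ordinal 4 0 isT.
Definition o1 : 'I_4 := @Ordinal 4 1 isT.
Definition o2 : 'I_4 := @Ordinal 4 2 isT.
Definition o3 : 'I_4 := @Ordinal 4 3 isT.

Section L4.
Variable R : pzRingType.
Implicit Types a b c d : 'I_4.
Lemma swap01 a b c d :
  levi (R:=R) [tuple b; a; c; d] = - levi (R:=R) [tuple a; b; c; d].
Proof.
have -> : [tuple b; a; c; d] = [tuple tnth [tuple a; b; c; d] (tperm o0 o1 k) | k < 4].
  apply: eq_from_tnth => k; rewrite tnth_mktuple permE /=.
  by case: k => [[|[|[|[|k]]]] Hk].
by rewrite levi_permute odd_tperm /= mulN1r.
Qed.
Lemma swap12 a b c d :
  levi (R:=R) [tuple a; c; b; d] = - levi (R:=R) [tuple a; b; c; d].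
Proof.
have -> : [tuple a; c; b; d] = [tuple tnth [tuple a; b; c; d] (tperm o1 o2 k) | k < 4].
  apply: eq_from_tnth => k; rewrite tnth_mktuple permE /=.
  by case: k => [[|[|[|[|k]]]] Hk].
by rewrite levi_permute odd_tperm /= mulN1r.
Qed.
Lemma swap23 a b c d :
  levi (R:=R) [tuple a; b; d; c] = - levi (R:=R) [tuple a; b; c; d].
Proof.
have -> : [tuple a; b; d; c] = [tuple tnth [tuple a; b; c; d] (tperm o2 o3 k) | k < 4].
  apply: eq_from_tnth => k; rewrite tnth_mktuple permE /=.
  by case: k => [[|[|[|[|k]]]] Hk].
by rewrite levi_permute odd_tperm /= mulN1r.
Qed.
Lemma levi_dup (t : 4.-tuple 'I_4) k l : k != l -> tnth t k = tnth t l -> levi (R:=R) t = 0.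
Proof.
move=> kl E; apply: levi_none => p; case: (eqVneq (p k) (tnth t k)) => [E1|]; last by exists k.
exists l; rewrite -E -E1; apply/negP => /eqP /perm_inj /eqP; rewrite eq_sym; apply/negP.
by [].
Qed.
Lemma levi_id a b c d : val a = 0%N -> val b = 1%N -> val c = 2%N -> val d = 3%N ->
  levi (R:=R) [tuple a; b; c; d] = 1.
Proof.
move=> Ha Hb Hc Hd; rewrite (@levi_char _ _ _ 1) ?odd_perm1 // => k; rewrite perm1.
apply: val_inj; case: k => [[|[|[|[|k]]]] Hk] //=.
Qed.
End L4.

Definition eps4 (R : pzRingType) (a b c d : 'I_4) : R :=
  let a := nat_of_ord a in let b := nat_of_ord b in
  let c := nat_of_ord c in let d := nat_of_ord d in
  if uniq [:: a; b; c; d] then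
    (if odd ((b < a) + (c < a) + (d < a) + (c < b) + (d < b) + (d < c))%N then -1 else 1)
  else 0.

Ltac bsort := repeat match goal with
 | |- context [levi [tuple ?a; ?b; ?c; ?d]] =>
   first [ (have _ : (nat_of_ord b < nat_of_ord a)%N by []); rewrite (swap01 _ b a c d)
         | (have _ : (nat_of_ord c < nat_of_ord b)%N by []); rewrite (swap12 _ a c b d)
         | (have _ : (nat_of_ord d < nat_of_ord c)%N by []); rewrite (swap23 _ a b d c) ]
 end.

Lemma levi4 (R : pzRingType) (a b c d : 'I_4) : levi (R:=R) [tuple a; b; c; d] = eps4 R a b c d.
Proof.
case: a => [[|[|[|[|a]]]] Ha] //; case: b => [[|[|[|[|b]]]] Hb] //;
case: c => [[|[|[|[|c]]]] Hc] //; case: d => [[|[|[|[|d]]]] Hd] //;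
rewrite /eps4 /=;
first [ by apply: (@levi_dup _ _ o0 o1) => //; apply: val_inj
      | by apply: (@levi_dup _ _ o0 o2) => //; apply: val_inj
      | by apply: (@levi_dup _ _ o0 o3) => //; apply: val_inj
      | by apply: (@levi_dup _ _ o1 o2) => //; apply: val_inj
      | by apply: (@levi_dup _ _ o1 o3) => //; apply: val_inj
      | by apply: (@levi_dup _ _ o2 o3) => //; apply: val_inj
      | bsort; rewrite levi_id ?opprK //].
Qed.

Lemma sum4 (R : nmodType) (F : 'I_4 -> R) : \sum_(i < 4) F i = F o0 + F o1 + F o2 + F o3.
Proof.
rewrite !big_ord_recr big_ord0 /= add0r.
by congr (_ + _ + _ + _); congr F; apply: val_inj.
Qed.

Definition E24 (R : zmodType) (F : 'I_4 -> 'I_4 -> 'I_4 -> 'I_4 -> R) : R :=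
 0 + (F o0 o1 o2 o3) - (F o0 o1 o3 o2) - (F o0 o2 o1 o3) + (F o0 o2 o3 o1) + (F o0 o3 o1 o2) - (F o0 o3 o2 o1) - (F o1 o0 o2 o3) + (F o1 o0 o3 o2) + (F o1 o2 o0 o3) - (F o1 o2 o3 o0) - (F o1 o3 o0 o2) + (F o1 o3 o2 o0) + (F o2 o0 o1 o3) - (F o2 o0 o3 o1) - (F o2 o1 o0 o3) + (F o2 o1 o3 o0) + (F o2 o3 o0 o1) - (F o2 o3 o1 o0) - (F o3 o0 o1 o2) + (F o3 o0 o2 o1) + (F o3 o1 o0 o2) - (F o3 o1 o2 o0) - (F o3 o2 o0 o1) + (F o3 o2 o1 o0).

Arguments E24 {R}.
Lemma sum_levi4 (R : comRingType) (F : 'I_4 -> 'I_4 -> 'I_4 -> 'I_4 -> R) :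
  \sum_(a < 4) \sum_(b < 4) \sum_(c < 4) \sum_(d < 4) levi [tuple a; b; c; d] * F a b c d
  = E24 F.
Proof.
(under eq_bigr do under eq_bigr do under eq_bigr do under eq_bigr do rewrite levi4). rewrite !sum4 /eps4 /E24 /=.
ring.
Qed.

Lemma sumK4 (R : pzRingType) (k : R) (F : 'I_4 -> 'I_4 -> 'I_4 -> 'I_4 -> R) :
  k * (\sum_(a < 4) \sum_(b < 4) \sum_(c < 4) \sum_(d < 4) F a b c d)
  = \sum_(a < 4) \sum_(b < 4) \sum_(c < 4) \sum_(d < 4) (k * F a b c d).
Proof.
rewrite mulr_sumr; apply: eq_bigr => a _; rewrite mulr_sumr; apply: eq_bigr => b _.
rewrite mulr_sumr; apply: eq_bigr => c' _; rewrite mulr_sumr; apply: eq_bigr => d _.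
by [].
Qed.

Lemma ord4_cases (a : 'I_4) : [\/ a = o0, a = o1, a = o2 | a = o3].
Proof.
case: a => [[|[|[|[|a]]]] Ha] //.
- by apply: Or41; apply: val_inj.
- by apply: Or42; apply: val_inj.
- by apply: Or43; apply: val_inj.
- by apply: Or44; apply: val_inj.
Qed.

Definition Tf (R : pzRingType) (C0 C1 C2 C3 : R) (a b c : 'I_4) : R :=
  eps4 R a b c o0 * C0 + eps4 R a b c o1 * C1 + eps4 R a b c o2 * C2 + eps4 R a b c o3 * C3.
Definition Ps (R : Type) (P : 'I_4 -> 'I_4 -> R) (a b : 'I_4) : R :=
  if (nat_of_ord a <= nat_of_ord b)%N then P a b else P b a.

Arguments Tf {R}.
Arguments Ps {R}.
Lemma alg4' (R : comRingType) (r C0 C1 C2 C3 : R) (P : 'I_4 -> 'I_4 -> R) (w v : 'I_4 -> R) :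
  \sum_(i1 < 4) \sum_(i2 < 4) \sum_(i3 < 4) \sum_(i4 < 4)
   (levi [tuple i1; i2; i3; i4] *
   \sum_(j1 < 4) \sum_(j2 < 4) \sum_(j3 < 4) \sum_(j4 < 4)
    (levi [tuple j1; j2; j3; j4] *
      (r * Ps P i2 j1 * w i4 * w j4 * v i1 * Tf C0 C1 C2 C3 i3 j3 j2))) = 0.
Proof.
(under eq_bigr do under eq_bigr do under eq_bigr do under eq_bigr do rewrite sum_levi4).
rewrite sum_levi4.
rewrite /E24 /Tf /Ps /eps4 /=.
ring.
Qed.

Definition Tk (R : pzRingType) (A : 'I_4 -> 'I_4 -> R) (w : 'I_4 -> R) (a b c : 'I_4) : R :=
  \sum_(k1 < 4) \sum_(k2 < 4) \sum_(k3 < 4) \sum_(k4 < 4)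
    levi [tuple k1; k2; k3; k4] * (A a k1 * A b k2 * A c k3 * w k4).

Arguments Tk {R}.
Lemma Trep (R : comRingType) (A : 'I_4 -> 'I_4 -> R) (w : 'I_4 -> R) a b c :
  Tk A w a b c = Tf (- Tk A w o1 o2 o3) (Tk A w o0 o2 o3) (- Tk A w o0 o1 o3) (Tk A w o0 o1 o2) a b c.
Proof.
case: (ord4_cases a) => ->; case: (ord4_cases b) => ->; case: (ord4_cases c) => ->;
rewrite /Tk !sum_levi4 /E24 /Tf /eps4 /=; ring.
Qed.

Lemma alg4 (R : comRingType) (r : R) (P A : 'I_4 -> 'I_4 -> R) (w v : 'I_4 -> R) :
  (forall a b, P a b = P b a) ->
     \sum_(i1 < 4) \sum_(i2 < 4) \sum_(i3 < 4) \sum_(i4 < 4)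
     \sum_(j1 < 4) \sum_(j2 < 4) \sum_(j3 < 4) \sum_(j4 < 4)
     \sum_(k1 < 4) \sum_(k2 < 4) \sum_(k3 < 4) \sum_(k4 < 4)
       levi [tuple i1; i2; i3; i4] * levi [tuple j1; j2; j3; j4]
         * levi [tuple k1; k2; k3; k4]
       * (r * P i2 j1
          * A i3 k1 * A j3 k2 * A j2 k3
          * w i4 * w j4 * w k4
          * v i1) = 0.
Proof.
move=> hP.
have PsE a b : Ps P a b = P a b by rewrite /Ps; case: ifP.
apply: (etrans _ (alg4' _ r (- Tk A w o1 o2 o3) (Tk A w o0 o2 o3) (- Tk A w o0 o1 o3) (Tk A w o0 o1 o2) P w v)).
apply: eq_bigr => i1 _; apply: eq_bigr => i2 _; apply: eq_bigr => i3 _; apply: eq_bigr => i4 _.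
rewrite sumK4.
apply: eq_bigr => j1 _; apply: eq_bigr => j2 _; apply: eq_bigr => j3 _; apply: eq_bigr => j4 _.
rewrite -Trep PsE /Tk !sumK4.
apply: eq_bigr => k1 _; apply: eq_bigr => k2 _; apply: eq_bigr => k3 _; apply: eq_bigr => k4 _.
ring.
Qed.

Definition p0 : 'I_3 := @Ordinal 3 0 isT.
Definition p1 : 'I_3 := @Ordinal 3 1 isT.
Definition p2 : 'I_3 := @Ordinal 3 2 isT.

Section L3.
Variable R : pzRingType.
Implicit Types a b c : 'I_3.
Lemma swap01_3 a b c :
  levi (R:=R) [tuple b; a; c] = - levi (R:=R) [tuple a; b; c].
Proof.
have -> : [tuple b; a; c] = [tuple tnth [tuple a; b; c] (tperm p0 p1 k) | k < 3].
  apply: eq_from_tnth => k; rewrite tnth_mktuple permE /=.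
  by case: k => [[|[|[|k]]] Hk].
by rewrite levi_permute odd_tperm /= mulN1r.
Qed.
Lemma swap12_3 a b c :
  levi (R:=R) [tuple a; c; b] = - levi (R:=R) [tuple a; b; c].
Proof.
have -> : [tuple a; c; b] = [tuple tnth [tuple a; b; c] (tperm p1 p2 k) | k < 3].
  apply: eq_from_tnth => k; rewrite tnth_mktuple permE /=.
  by case: k => [[|[|[|k]]] Hk].
by rewrite levi_permute odd_tperm /= mulN1r.
Qed.
Lemma levi_dup3 (t : 3.-tuple 'I_3) k l : k != l -> tnth t k = tnth t l -> levi (R:=R) t = 0.
Proof.
move=> kl E; apply: levi_none => p; case: (eqVneq (p k) (tnth t k)) => [E1|]; last by exists k.
exists l; rewrite -E -E1; apply/negP => /eqP /perm_inj /eqP; rewrite eq_sym; apply/negP.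
by [].
Qed.
Lemma levi_id3 a b c : val a = 0%N -> val b = 1%N -> val c = 2%N ->
  levi (R:=R) [tuple a; b; c] = 1.
Proof.
move=> Ha Hb Hc; rewrite (@levi_char _ _ _ 1) ?odd_perm1 // => k; rewrite perm1.
apply: val_inj; case: k => [[|[|[|k]]] Hk] //=.
Qed.
End L3.

Definition eps3 (R : pzRingType) (a b c : 'I_3) : R :=
  let a := nat_of_ord a in let b := nat_of_ord b in
  let c := nat_of_ord c in
  if uniq [:: a; b; c] then
    (if odd ((b < a) + (c < a) + (c < b))%N then -1 else 1)
  else 0.

Ltac bsort3 := repeat match goal with
 | |- context [levi [tuple ?a; ?b; ?c]] =>
   first [ (have _ : (nat_of_ord b < nat_of_ord a)%N by []); rewrite (swap01_3 _ b a c)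
         | (have _ : (nat_of_ord c < nat_of_ord b)%N by []); rewrite (swap12_3 _ a c b) ]
 end.

Lemma levi3 (R : pzRingType) (a b c : 'I_3) : levi (R:=R) [tuple a; b; c] = eps3 R a b c.
Proof.
case: a => [[|[|[|a]]] Ha] //; case: b => [[|[|[|b]]] Hb] //;
case: c => [[|[|[|c]]] Hc] //;
rewrite /eps3 /=;
first [ by apply: (@levi_dup3 _ _ p0 p1) => //; apply: val_inj
      | by apply: (@levi_dup3 _ _ p0 p2) => //; apply: val_inj
      | by apply: (@levi_dup3 _ _ p1 p2) => //; apply: val_inj
      | bsort3; rewrite levi_id3 ?opprK //].
Qed.

Lemma sum3 (R : nmodType) (F : 'I_3 -> R) : \sum_(i < 3) F i = F p0 + F p1 + F p2.
Proof.
rewrite !big_ord_recr big_ord0 /= add0r.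
by congr (_ + _ + _); congr F; apply: val_inj.
Qed.

Definition E6 (R : zmodType) (F : 'I_3 -> 'I_3 -> 'I_3 -> R) : R :=
 0 + (F p0 p1 p2) - (F p0 p2 p1) - (F p1 p0 p2) + (F p1 p2 p0) + (F p2 p0 p1) - (F p2 p1 p0).
Arguments E6 {R}.

Lemma sum_levi3 (R : comRingType) (F : 'I_3 -> 'I_3 -> 'I_3 -> R) :
  \sum_(a < 3) \sum_(b < 3) \sum_(c < 3) levi [tuple a; b; c] * F a b c = E6 F.
Proof.
under eq_bigr do under eq_bigr do under eq_bigr do rewrite levi3.
rewrite !sum3 /eps3 /E6 /=; ring.
Qed.

Lemma sumK3 (R : pzRingType) (k : R) (F : 'I_3 -> 'I_3 -> 'I_3 -> R) :
  k * (\sum_(a < 3) \sum_(b < 3) \sum_(c < 3) F a b c)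
  = \sum_(a < 3) \sum_(b < 3) \sum_(c < 3) (k * F a b c).
Proof.
rewrite mulr_sumr; apply: eq_bigr => a _; rewrite mulr_sumr; apply: eq_bigr => b _.
rewrite mulr_sumr; apply: eq_bigr => c' _; by [].
Qed.

Lemma ord3_cases (a : 'I_3) : [\/ a = p0, a = p1 | a = p2].
Proof.
case: a => [[|[|[|a]]] Ha] //.
- by apply: Or31; apply: val_inj.
- by apply: Or32; apply: val_inj.
- by apply: Or33; apply: val_inj.
Qed.

Definition Ps3 (R : Type) (P : 'I_3 -> 'I_3 -> R) (a b : 'I_3) : R :=
  if (nat_of_ord a <= nat_of_ord b)%N then P a b else P b a.
Arguments Ps3 {R}.

Lemma alg3' (R : comRingType) (r D : R) (P : 'I_3 -> 'I_3 -> R) (v : 'I_3 -> R) :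
  \sum_(i1 < 3) \sum_(i2 < 3) \sum_(i3 < 3)
   (levi [tuple i1; i2; i3] *
   \sum_(j1 < 3) \sum_(j2 < 3) \sum_(j3 < 3)
    (levi [tuple j1; j2; j3] *
      (r * Ps3 P i2 j1 * v i1 * (eps3 R i3 j3 j2 * D)))) = 0.
Proof.
under eq_bigr do under eq_bigr do under eq_bigr do rewrite sum_levi3.
rewrite sum_levi3 /E6 /Ps3 /eps3 /=.
ring.
Qed.

Definition Tk3 (R : pzRingType) (A : 'I_3 -> 'I_3 -> R) (a b c : 'I_3) : R :=
  \sum_(k1 < 3) \sum_(k2 < 3) \sum_(k3 < 3)
    levi [tuple k1; k2; k3] * (A a k1 * A b k2 * A c k3).
Arguments Tk3 {R}.

Lemma Trep3 (R : comRingType) (A : 'I_3 -> 'I_3 -> R) a b c :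
  Tk3 A a b c = eps3 R a b c * Tk3 A p0 p1 p2.
Proof.
case: (ord3_cases a) => ->; case: (ord3_cases b) => ->; case: (ord3_cases c) => ->;
rewrite /Tk3 !sum_levi3 /E6 /eps3 /=; ring.
Qed.

Lemma alg3 (R : comRingType) (r : R) (P A : 'I_3 -> 'I_3 -> R) (v : 'I_3 -> R) :
  (forall a b, P a b = P b a) ->
     \sum_(i1 < 3) \sum_(i2 < 3) \sum_(i3 < 3)
     \sum_(j1 < 3) \sum_(j2 < 3) \sum_(j3 < 3)
     \sum_(k1 < 3) \sum_(k2 < 3) \sum_(k3 < 3)
       levi [tuple i1; i2; i3] * levi [tuple j1; j2; j3]
         * levi [tuple k1; k2; k3]
       * (r * P i2 j1
          * A i3 k1 * A j3 k2 * A j2 k3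
          * v i1) = 0.
Proof.
move=> hP.
have PsE a b : Ps3 P a b = P a b by rewrite /Ps3; case: ifP.
apply: (etrans _ (alg3' _ r (Tk3 A p0 p1 p2) P v)).
apply: eq_bigr => i1 _; apply: eq_bigr => i2 _; apply: eq_bigr => i3 _.
rewrite sumK3.
apply: eq_bigr => j1 _; apply: eq_bigr => j2 _; apply: eq_bigr => j3 _.
rewrite -Trep3 PsE /Tk3 !sumK3.
apply: eq_bigr => k1 _; apply: eq_bigr => k2 _; apply: eq_bigr => k3 _.
ring.
Qed.

Section Clairaut.
Variables (R : realType) (n : nat).
Local Notation V := 'rV[R]_n.

Lemma dirline (f : V -> R) (y e : V) (s : R) :
  derivable f (s *: e + y) e ->
  is_derive s (1 : R) (fun t : R => f (t *: e + y)) ('D_e f (s *: e + y)).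
Proof.
move=> df.
have E : (fun h : R => h^-1 *: (((fun t : R => f (t *: e + y)) \o shift s) (h *: (1:R)) - f (s *: e + y)))
  = (fun h : R => h^-1 *: ((f \o shift (s *: e + y)) (h *: e) - f (s *: e + y))).
  apply/funext => h /=; congr (_ *: (f _ - _)).
  by rewrite [_%:A]mulr1 scalerDl addrA.
split; first by rewrite /derivable E.
by rewrite /derive E.
Qed.

Lemma norm_delta (i : 'I_n) : `| delta_mx 0 i : V | <= 1.
Proof.
change (mx_norm (delta_mx 0 i : V) <= 1).
have [->|/mx_norm_neq0 [k ->]] := eqVneq (mx_norm (delta_mx 0 i : V)) 0; first by [].
by rewrite mxE; case: (_ && _); rewrite ?normr1 ?normr0.
Qed.


Lemma line_mvt (f : V -> R) (y e : V) (a b : R) : a < b -> (forall z, derivable f z e) ->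
  exists2 c, c \in `]a, b[ & f (b *: e + y) - f (a *: e + y) = 'D_e f (c *: e + y) * (b - a).
Proof.
move=> ab df.
apply: (@MVT R (fun t => f (t *: e + y)) (fun t => 'D_e f (t *: e + y))) => //.
  by move=> t _; exact: dirline.
apply: derivable_within_continuous => t _.
by case: (dirline f y e t (df _)).
Qed.

Lemma line_mvt2 (f : V -> R) (y1 y2 e : V) (a b : R) : a < b -> (forall z, derivable f z e) ->
  exists2 c, c \in `]a, b[ &
   (f (b *: e + y1) - f (b *: e + y2)) - (f (a *: e + y1) - f (a *: e + y2))
   = ('D_e f (c *: e + y1) - 'D_e f (c *: e + y2)) * (b - a).
Proof.
move=> ab df.
have H t : is_derive t (1:R) ((fun t => f (t *: e + y1)) - (fun t => f (t *: e + y2)))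
   ('D_e f (t *: e + y1) - 'D_e f (t *: e + y2)).
  by apply: is_deriveB; exact: dirline.
have [c cab E] := @MVT R ((fun t => f (t *: e + y1)) - (fun t => f (t *: e + y2)))
   (fun t => 'D_e f (t *: e + y1) - 'D_e f (t *: e + y2)) a b ab (fun t _ => H t)
   (derivable_within_continuous (fun t _ => ltac:(by case: (H t)))).
by exists c.
Qed.


Lemma delta_rep (g : V -> R) (i j : 'I_n) (x : V) (h : R) : smooth g -> 0 < h ->
  exists c d : R, [/\ 0 < c < h, 0 < d < h &
   (g (h *: delta_mx 0 i + (h *: delta_mx 0 j + x)) - g (h *: delta_mx 0 i + x))
     - (g (h *: delta_mx 0 j + x) - g x)
   = pd j (pd i g) (d *: delta_mx 0 j + (c *: delta_mx 0 i + x)) * (h * h)].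
Proof.
move=> sg hpos.
have dg z : derivable g z (delta_mx 0 i) by apply: diff_derivable; exact: (sg [::] z).
have dpg z : derivable (pd i g) z (delta_mx 0 j) by apply: diff_derivable; exact: (sg [:: i] z).
have [c cI E1] := line_mvt2 g (h *: delta_mx 0 j + x) x (delta_mx 0 i) 0 h hpos dg.
have [d dI E2] := line_mvt (pd i g) (c *: delta_mx 0 i + x) (delta_mx 0 j) 0 h hpos dpg.
exists c, d; split.
- by move: cI; rewrite in_itv.
- by move: dI; rewrite in_itv.
rewrite !scale0r !add0r subr0 in E1 E2.
rewrite E1 mulrA -E2 (addrCA (c *: delta_mx 0 i)).
by [].
Qed.


Lemma near_ball_of (F : V -> R) (x : V) (e : R) : {for x, continuous F} -> 0 < e ->
  exists2 r : R, 0 < r & forall y : V, `|x - y| < r -> `|F x - F y| < e.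
Proof.
move=> /cvgrPdist_lt /(_ e) H e0; have := H e0.
case/nbhs_ballP => r r0 Hr; exists r => // y xy; apply: Hr.
by rewrite -ball_normE /ball_ /=.
Qed.

Lemma dist_pt (x a b : V) (c d : R) : 0 < c -> 0 < d ->
  `|x - (d *: a + (c *: b + x))| <= d * `|a| + c * `|b|.
Proof.
move=> c0 d0.
have -> : x - (d *: a + (c *: b + x)) = - (d *: a + c *: b)
  by rewrite addrA opprD addrCA subrr addr0.
rewrite normrN (le_trans (ler_normD _ _)) // !normrZ !gtr0_norm //.
Qed.


Lemma bound_aux2 (c d h r m p q : R) : c < h -> d < h -> h = m / 3 -> m <= r -> 0 < m ->
  p <= d -> q <= c -> p + q < r.
Proof. move=> ch dh hE mr m0 pd qc; rewrite hE in ch dh; lra. Qed.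

Lemma fin_aux (a b s e : R) : a < e / 2 -> b < e / 2 -> s <= a + b -> s <= e.
Proof. move=> *; lra. Qed.

Lemma swap_aux (a b c d : R) : a - b - (c - d) = a - c - (b - d).
Proof. ring. Qed.

Lemma fin2 (u v p q e : R) : `|u - p| < e / 2 -> `|v - q| < e / 2 -> p = q -> `|v - u| <= e.
Proof.
move=> A B E; rewrite -E in B.
have -> : v - u = (v - p) - (u - p) by ring.
apply: le_trans (ler_normB _ _) _; lra.
Qed.

Lemma clairaut (g : V -> R) (i j : 'I_n) (x : V) : smooth g ->
  pd i (pd j g) x = pd j (pd i g) x.
Proof.
move=> sg.
have c1 : {for x, continuous (pd j (pd i g))} := differentiable_continuous (sg [:: j; i] x).
have c2 : {for x, continuous (pd i (pd j g))} := differentiable_continuous (sg [:: i; j] x).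
apply/eqP; rewrite -subr_eq0 -normr_le0; apply/ler_addgt0Pr => e e0; rewrite add0r.
have e20 : 0 < e / 2 by rewrite divr_gt0.
have [r1 r10 H1] := near_ball_of _ _ _ c1 e20.
have [r2 r20 H2] := near_ball_of _ _ _ c2 e20.
pose h := Num.min r1 r2 / 3.
have m1 : Num.min r1 r2 <= r1 by rewrite ge_min lexx.
have m2 : Num.min r1 r2 <= r2 by rewrite ge_min lexx orbT.
have m0 : 0 < Num.min r1 r2 by rewrite lt_min r10 r20.
have h0 : 0 < h by rewrite divr_gt0.
have [c [d [/andP[c0 ch] /andP[d0 dh] Ea]]] := delta_rep g i j x h sg h0.
have [c' [d' [/andP[c0' ch'] /andP[d0' dh'] Eb]]] := delta_rep g j i x h sg h0.
have Eh : pd j (pd i g) (d *: delta_mx 0 j + (c *: delta_mx 0 i + x)) * (h * h)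
         = pd i (pd j g) (d' *: delta_mx 0 i + (c' *: delta_mx 0 j + x)) * (h * h).
  apply: (etrans (esym Ea)); apply: (etrans _ Eb).
  rewrite [h *: delta_mx 0 j + (h *: delta_mx 0 i + x)](addrCA (h *: delta_mx 0 j)).
  exact: swap_aux.
have hn : h != 0 := lt0r_neq0 h0.
have hh0 : h * h != 0 := mulf_neq0 hn hn.
have Eab := mulIf hh0 Eh.
have n1 := norm_delta i; have n2 := norm_delta j.
have nn1 : 0 <= `|delta_mx 0 i : V| by [].
have nn2 : 0 <= `|delta_mx 0 j : V| by [].
have b1 : `|x - (d *: delta_mx 0 j + (c *: delta_mx 0 i + x))| < r1.
  apply: (le_lt_trans (dist_pt _ _ _ _ _ c0 d0)).
  exact: (bound_aux2 _ _ _ _ _ _ _ ch dh (erefl : h = Num.min r1 r2 / 3) m1 m0 (ler_piMr (ltW d0) n2) (ler_piMr (ltW c0) n1)).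
have b2 : `|x - (d' *: delta_mx 0 i + (c' *: delta_mx 0 j + x))| < r2.
  apply: (le_lt_trans (dist_pt _ _ _ _ _ c0' d0')).
  exact: (bound_aux2 _ _ _ _ _ _ _ ch' dh' (erefl : h = Num.min r1 r2 / 3) m2 m0 (ler_piMr (ltW d0') n1) (ler_piMr (ltW c0') n2)).
exact: (fin2 _ _ _ _ _ (H1 _ b1) (H2 _ b2) Eab).
Qed.

End Clairaut.

Theorem mainTheorem2 (R : realType) :
  (forall (rho a f : 'rV[R]_3 -> R),
     smooth rho -> smooth a -> smooth f ->
     forall x : 'rV[R]_3,
     \sum_(i1 < 3) \sum_(i2 < 3) \sum_(i3 < 3)
     \sum_(j1 < 3) \sum_(j2 < 3) \sum_(j3 < 3)
     \sum_(k1 < 3) \sum_(k2 < 3) \sum_(k3 < 3)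
       levi [tuple i1; i2; i3] * levi [tuple j1; j2; j3]
         * levi [tuple k1; k2; k3]
       * (rho x ^+ 2 * pd i2 (pd j1 rho) x
          * pd i3 (pd k1 a) x * pd j3 (pd k2 a) x * pd j2 (pd k3 a) x
          * pd i1 f x) = 0)
  /\
  (forall (rho a1 a2 f : 'rV[R]_4 -> R),
     smooth rho -> smooth a1 -> smooth a2 -> smooth f ->
     forall x : 'rV[R]_4,
     \sum_(i1 < 4) \sum_(i2 < 4) \sum_(i3 < 4) \sum_(i4 < 4)
     \sum_(j1 < 4) \sum_(j2 < 4) \sum_(j3 < 4) \sum_(j4 < 4)
     \sum_(k1 < 4) \sum_(k2 < 4) \sum_(k3 < 4) \sum_(k4 < 4)
       levi [tuple i1; i2; i3; i4] * levi [tuple j1; j2; j3; j4]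
         * levi [tuple k1; k2; k3; k4]
       * (rho x ^+ 2 * pd i2 (pd j1 rho) x
          * pd i3 (pd k1 a1) x * pd j3 (pd k2 a1) x * pd j2 (pd k3 a1) x
          * pd i4 a2 x * pd j4 a2 x * pd k4 a2 x
          * pd i1 f x) = 0).
Proof.
split.
- move=> rho a f srho _ _ x.
  apply: (alg3 _ (rho x ^+ 2) (fun p q => pd p (pd q rho) x) (fun p q => pd p (pd q a) x)
           (fun p => pd p f x)).
  by move=> p q; apply: clairaut.
- move=> rho a1 a2 f srho _ _ _ x.
  apply: (alg4 _ (rho x ^+ 2) (fun p q => pd p (pd q rho) x) (fun p q => pd p (pd q a1) x)
           (fun p => pd p a2 x) (fun p => pd p f x)).
  by move=> p q; apply: clairaut.
Qed.
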